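(* $\mathsf{ConC}_{[0,1]}\equiv_{sW}\overline{\mathsf{ConC}_{[0,1]}}\equiv_{sW}\mathsf{T}\mathsf{ConC}_{[0,1]}$.
   Context: A problem $f:\subseteq X\rightrightarrows Y$ between represented spaces is a partial multi-valued map; $F\vdash f$ means $\delta_YF(p)\in f(\delta_X(p))$ whenever $\delta_X(p)\in\mathrm{dom}(f)$; $f\le_{sW}g$ iff there are computable $H,K$ with $HGK\vdash f$ for all $G\vdash g$. $[0,1]$ is a computable metric space with the Cauchy representation; $\mathcal A_-([0,1])$ is the space of closed subsets represented by $p\mapsto[0,1]\setminus\bigcup_nB_{p(n)}$ where $(B_n)$ is a standard enumeration of rational open balls (including empty ones). $\mathsf{ConC}_{[0,1]}:\subseteq\mathcal A_-([0,1])\rightrightarrows[0,1]$, $A\mapsto A$, is defined exactly on the nonempty connected closed sets. For $p\in\mathbb{N}^\mathbb{N}$, $p-1$ is the concatenation of $p(0)-1,p(1)-1,\dots$ with $0-1$ the empty word; the completion of $(X,\delta_X)$ is $\overline X=X\cup\{\bot\}$ with $\delta_{\overline X}(p)=\delta_X(p-1)$ if $p-1$ is an infinite sequence in $\mathrm{dom}(\delta_X)$ and $\bot$ otherwise. For $f:\subseteq X\rightrightarrows Y$: $\overline f:\overline X\rightrightarrows\overline Y$ equals $f$ on $\mathrm{dom}(f)$ and $\overline Y$ elsewhere; $\mathsf Tf:X\rightrightarrows Y$ equals $f$ on $\mathrm{dom}(f)$ and $Y$ elsewhere. *)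

(* Defs.v *)
From Stdlib Require Import Reals QArith Qreals Arith Lia Cantor.
From Stdlib Require Import Rtopology.
Open Scope R_scope.

Definition baire := nat -> nat.

(* Codes of (unary) partial recursive functions, with Cantor pairing. *)
Inductive prf : Type :=
| PZero | PSucc | PId | PFst | PSnd
| PPair (f g : prf)
| PComp (f g : prf)
| PRec (f g : prf)           (* <x,0> |-> f x ; <x,m+1> |-> g <x,<m, h<x,m>>> *)
| PMu (f : prf).             (* x |-> least n with f<x,n> = 0 (earlier values defined) *)

Inductive peval : prf -> nat -> nat -> Prop :=
| ev_zero x : peval PZero x 0
| ev_succ x : peval PSucc x (S x)
| ev_id x : peval PId x x
| ev_fst x : peval PFst x (fst (Cantor.of_nat x))
| ev_snd x : peval PSnd x (snd (Cantor.of_nat x))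
| ev_pair f g x a b : peval f x a -> peval g x b ->
    peval (PPair f g) x (Cantor.to_nat (a, b))
| ev_comp f g x y z : peval g x y -> peval f y z -> peval (PComp f g) x z
| ev_rec0 f g x v : peval f x v -> peval (PRec f g) (Cantor.to_nat (x, 0%nat)) v
| ev_recS f g x m w v : peval (PRec f g) (Cantor.to_nat (x, m)) w ->
    peval g (Cantor.to_nat (x, Cantor.to_nat (m, w))) v ->
    peval (PRec f g) (Cantor.to_nat (x, S m)) v
| ev_mu f x n : peval f (Cantor.to_nat (x, n)) 0%nat ->
    (forall m, (m < n)%nat -> exists k, peval f (Cantor.to_nat (x, m)) (S k)) ->
    peval (PMu f) x n.

Fixpoint code_list (l : list nat) : nat :=
  match l with nil => 0%nat | cons a l => S (Cantor.to_nat (a, code_list l)) end.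

Fixpoint prefix (p : baire) (k : nat) : list nat :=
  match k with 0%nat => nil | S k => app (prefix p k) (cons (p k) nil) end.

(* The partial function Baire -> Baire computed by the (type-2) machine e:
   on input p, the n-th output symbol is v whenever e(<p|k, n>) = v+1 for
   some prefix length k (0 meaning "no output yet"). *)
Definition Phi (e : prf) (p q : baire) : Prop :=
  forall n : nat,
    (exists k, peval e (Cantor.to_nat (code_list (prefix p k), n)) (S (q n))) /\
    (forall k v, peval e (Cantor.to_nat (code_list (prefix p k), n)) (S v) -> v = q n).

Record rep_space := { car : Type; rep : baire -> car -> Prop }.

(* a (partial multi-valued) problem f :⊆ X ⇉ Y, as a relation; dom f = {x | f x ≠ ∅} *)
Definition problem (X Y : rep_space) := car X -> car Y -> Prop.
Definition pdom {X Y : rep_space} (f : problem X Y) (x : car X) : Prop :=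
  exists y, f x y.

Definition functional (F : baire -> baire -> Prop) : Prop :=
  forall p q1 q2, F p q1 -> F p q2 -> q1 = q2.

Definition realizes {X Y : rep_space} (F : baire -> baire -> Prop) (f : problem X Y) : Prop :=
  forall p x, rep X p x -> pdom f x ->
    exists q, F p q /\ exists y, rep Y q y /\ f x y.

Definition comp3 (H G K : baire -> baire -> Prop) (p t : baire) : Prop :=
  exists r s, K p r /\ G r s /\ H s t.

Definition sW_le {X Y U V : rep_space} (f : problem X Y) (g : problem U V) : Prop :=
  exists eH eK : prf,
    forall G : baire -> baire -> Prop, functional G -> realizes G g ->
      realizes (comp3 (Phi eH) G (Phi eK)) f.

Definition sW_equiv {X Y U V : rep_space} (f : problem X Y) (g : problem U V) : Prop :=
  sW_le f g /\ sW_le g f.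

Definition minus1 (p q : baire) : Prop :=
  exists s : nat -> nat,
    (forall n, (s n < s (S n))%nat) /\
    (forall i, p i <> 0%nat <-> exists n, s n = i) /\
    (forall n, q n = (p (s n) - 1)%nat).

Definition completion (X : rep_space) : rep_space :=
  {| car := option (car X);
     rep := fun p ox => match ox with
                        | Some x => exists q, minus1 p q /\ rep X q x
                        | None => ~ exists q x, minus1 p q /\ rep X q x
                        end |}.

Definition pbar {X Y : rep_space} (f : problem X Y) : problem (completion X) (completion Y) :=
  fun ox oy => match ox with
               | Some x => (pdom f x /\ exists y, oy = Some y /\ f x y) \/ ~ pdom f x
               | None => True
               end.

Definition ptot {X Y : rep_space} (f : problem X Y) : problem X Y :=
  fun x y => f x y \/ ~ pdom f x.

Definition nuQ (n : nat) : Q :=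
  let (a, b) := Cantor.of_nat n in
  let (c, d) := Cantor.of_nat a in
  Qmake (Z.of_nat c - Z.of_nat d)%Z (Pos.of_succ_nat b).

Definition unit_interval : rep_space :=
  {| car := R;
     rep := fun p x => 0 <= x <= 1 /\
                       forall i, Rabs (x - Q2R (nuQ (p i))) <= (/ 2) ^ i |}.

(* standard enumeration of rational open balls (radius <= 0 gives the empty ball) *)
Definition ball (n : nat) (x : R) : Prop :=
  let (a, b) := Cantor.of_nat n in
  Rabs (x - Q2R (nuQ a)) < Q2R (nuQ b).

Definition closed_neg : rep_space :=
  {| car := R -> Prop;
     rep := fun p A => forall x, A x <-> ((0 <= x <= 1) /\ forall n, ~ ball (p n) x) |}.

Definition connected (A : R -> Prop) : Prop :=
  ~ exists U V : R -> Prop,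
      open_set U /\ open_set V /\
      (forall x, A x -> U x \/ V x) /\
      (exists x, A x /\ U x) /\ (exists x, A x /\ V x) /\
      (forall x, ~ (A x /\ U x /\ V x)).

Definition ConC : problem closed_neg unit_interval :=
  fun A x => A x /\ (exists y, A y) /\ connected A.

(* Main.v *)
Require Import Defs.
From Stdlib Require Import Reals QArith Qreals ZArith Arith Lia Lra Cantor List Rtopology.
Import ListNotations.

Inductive E : Type :=
| EVar (i : nat) | EZero | ESucc (e : E) | EPair (a b : E) | EFst (e : E) | ESnd (e : E)
| EIter (n i s : E).

Fixpoint den (e : E) (env : list nat) : nat :=
  match e with
  | EVar i => nth i env 0%nat
  | EZero => 0%nat
  | ESucc e => S (den e env)
  | EPair a b => Cantor.to_nat (den a env, den b env)
  | EFst e => fst (Cantor.of_nat (den e env))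
  | ESnd e => snd (Cantor.of_nat (den e env))
  | EIter n i s => nat_rect (fun _ => nat) (den i env)
                     (fun m h => den s (h :: m :: env)) (den n env)
  end.

Fixpoint enc (l : list nat) : nat :=
  match l with nil => 0%nat | x :: l => Cantor.to_nat (x, enc l) end.

Fixpoint sndn (i : nat) : prf := match i with 0%nat => PId | S i => PComp (sndn i) PSnd end.

Fixpoint comp (e : E) : prf :=
  match e with
  | EVar i => PComp PFst (sndn i)
  | EZero => PZero
  | ESucc e => PComp PSucc (comp e)
  | EPair a b => PPair (comp a) (comp b)
  | EFst e => PComp PFst (comp e)
  | ESnd e => PComp PSnd (comp e)
  | EIter n i s => PComp (PRec (comp i)
        (PComp (comp s) (PPair (PComp PSnd PSnd) (PPair (PComp PFst PSnd) PFst))))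
        (PPair PId (comp n))
  end.

Lemma of_nat0 : Cantor.of_nat 0 = (0%nat, 0%nat). Proof. reflexivity. Qed.
Opaque Cantor.to_nat Cantor.of_nat.

Lemma sndn_ok i env : peval (sndn i) (enc env) (enc (skipn i env)).
Proof.
  revert env; induction i; intros env; simpl.
  - constructor.
  - econstructor. apply ev_snd. destruct env as [|x l]; simpl.
    + specialize (IHi []). destruct i; exact IHi.
    + rewrite Cantor.cancel_of_to. simpl. apply IHi.
Qed.

Lemma shuffle_ok x m h :
  peval (PPair (PComp PSnd PSnd) (PPair (PComp PFst PSnd) PFst))
    (Cantor.to_nat (x, Cantor.to_nat (m, h))) (Cantor.to_nat (h, Cantor.to_nat (m, x))).
Proof.
  constructor.
  - econstructor. apply ev_snd. rewrite Cantor.cancel_of_to. simpl.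
    pose proof (ev_snd (Cantor.to_nat (m, h))) as H. rewrite Cantor.cancel_of_to in H. exact H.
  - constructor.
    + econstructor. apply ev_snd. rewrite Cantor.cancel_of_to. simpl.
      pose proof (ev_fst (Cantor.to_nat (m, h))) as H. rewrite Cantor.cancel_of_to in H. exact H.
    + pose proof (ev_fst (Cantor.to_nat (x, Cantor.to_nat (m, h)))) as H.
      rewrite Cantor.cancel_of_to in H. exact H.
Qed.

Lemma nth_enc i env : fst (Cantor.of_nat (enc (skipn i env))) = nth i env 0%nat.
Proof.
  revert env; induction i; intros [|x l]; simpl; try rewrite of_nat0; try reflexivity.
  - rewrite Cantor.cancel_of_to; reflexivity.
  - apply IHi.
Qed.

Lemma comp_ok e env : peval (comp e) (enc env) (den e env).
Proof.
  revert env; induction e; intros env; simpl.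
  - econstructor. apply sndn_ok. 
    rewrite <- nth_enc. 
    apply ev_fst.
  - constructor.
  - econstructor; [apply IHe|constructor].
  - constructor; auto.
  - econstructor; [apply IHe|constructor].
  - econstructor; [apply IHe|constructor].
  - econstructor. apply ev_pair; [constructor | apply IHe1].
    generalize (den e1 env) as m. intro m. induction m; simpl.
    + constructor. apply IHe2.
    + eapply ev_recS. apply IHm.
      econstructor. 2: apply (IHe3 (_ :: m :: env)).
      simpl. apply shuffle_ok.
Qed.

Definition pdet e := forall x v1 v2, peval e x v1 -> peval e x v2 -> v1 = v2.

Lemma inv_rec0 f g x v : peval (PRec f g) (Cantor.to_nat (x, 0%nat)) v -> peval f x v.
Proof.
  intros H. remember (Cantor.to_nat (x, 0%nat)) as y eqn:Ey. remember (PRec f g) as e eqn:Ee.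
  destruct H; try discriminate; injection Ee as E1 E2; subst.
  - apply Cantor.to_nat_inj in Ey; injection Ey as ->; auto.
  - apply Cantor.to_nat_inj in Ey; discriminate.
Qed.

Lemma inv_recS f g x m v : peval (PRec f g) (Cantor.to_nat (x, S m)) v ->
  exists w, peval (PRec f g) (Cantor.to_nat (x, m)) w /\
            peval g (Cantor.to_nat (x, Cantor.to_nat (m, w))) v.
Proof.
  intros H. remember (Cantor.to_nat (x, S m)) as y eqn:Ey. remember (PRec f g) as e eqn:Ee.
  destruct H; try discriminate; injection Ee as E1 E2; subst.
  - apply Cantor.to_nat_inj in Ey; discriminate.
  - apply Cantor.to_nat_inj in Ey; injection Ey as -> ->. eauto.
Qed.

Lemma rec_det f g : pdet f -> pdet g -> pdet (PRec f g).
Proof.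
  intros Hf Hg y v1 v2. rewrite <- (Cantor.cancel_to_of y). destruct (Cantor.of_nat y) as [x m].
  revert v1 v2. induction m; intros v1 v2 H1 H2.
  - apply inv_rec0 in H1; apply inv_rec0 in H2; eauto.
  - apply inv_recS in H1; apply inv_recS in H2.
    destruct H1 as [w1 [A1 B1]]; destruct H2 as [w2 [A2 B2]].
    assert (w1 = w2) by eauto; subst; eauto.
Qed.

Lemma inv_mu f x n : peval (PMu f) x n ->
  peval f (Cantor.to_nat (x, n)) 0%nat /\
  (forall m, (m < n)%nat -> exists k, peval f (Cantor.to_nat (x, m)) (S k)).
Proof. intros H; inversion H; subst; auto. Qed.

Lemma mu_det f : pdet f -> pdet (PMu f).
Proof.
  intros Hf x v1 v2 H1 H2. apply inv_mu in H1; apply inv_mu in H2.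
  destruct H1 as [A1 B1]; destruct H2 as [A2 B2].
  destruct (Nat.lt_trichotomy v1 v2) as [Hl|[Hl|Hl]]; auto.
  - destruct (B2 _ Hl) as [k Hk]. specialize (Hf _ _ _ A1 Hk); discriminate.
  - destruct (B1 _ Hl) as [k Hk]. specialize (Hf _ _ _ A2 Hk); discriminate.
Qed.

Lemma peval_det e : pdet e.
Proof.
  induction e; try (apply rec_det; auto); try (apply mu_det; auto);
  intros x v1 v2 H1 H2; inversion H1; inversion H2; subst; auto.
  - f_equal; eauto.
  - assert (y = y0) by eauto; subst; eauto.
Qed.

Definition mach (M : E) : prf := PComp (comp M) (PPair PFst (PPair PSnd PZero)).

Lemma mach_ok M c n : peval (mach M) (Cantor.to_nat (c, n)) (den M [c; n]).
Proof.
  econstructor. 2: apply (comp_ok M [c; n]).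
  simpl. constructor.
  - pose proof (ev_fst (Cantor.to_nat (c, n))) as H. rewrite Cantor.cancel_of_to in H. exact H.
  - constructor. pose proof (ev_snd (Cantor.to_nat (c, n))) as H. rewrite Cantor.cancel_of_to in H. exact H.
    constructor.
Qed.

Lemma Phi_of M p q :
  (forall n, (exists k, den M [code_list (prefix p k); n] = S (q n)) /\
             (forall k v, den M [code_list (prefix p k); n] = S v -> v = q n)) ->
  Phi (mach M) p q.
Proof.
  intros H n. destruct (H n) as [[k Hk] H2]. split.
  - exists k. rewrite <- Hk. apply mach_ok.
  - intros k' v Hv. apply (H2 k'). eapply peval_det. 2: apply Hv. apply mach_ok.
Qed.

Fixpoint lift (c : nat) (e : E) : E :=
  match e with
  | EVar i => if Nat.ltb i c then EVar i else EVar (S (S i))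
  | EZero => EZero
  | ESucc e => ESucc (lift c e)
  | EPair a b => EPair (lift c a) (lift c b)
  | EFst e => EFst (lift c e)
  | ESnd e => ESnd (lift c e)
  | EIter n i s => EIter (lift c n) (lift c i) (lift (S (S c)) s)
  end.

Lemma den_lift_gen e : forall c env a b, (c <= length env)%nat ->
  den (lift c e) (firstn c env ++ a :: b :: skipn c env) = den e env.
Proof.
  induction e; intros c env a b Hc; simpl; try (f_equal; auto; fail).
  - destruct (Nat.ltb_spec i c).
    + simpl. rewrite app_nth1. rewrite nth_firstn. destruct (Nat.ltb_spec i c); [reflexivity|lia].
      rewrite length_firstn; lia.
    + simpl. rewrite app_nth2; rewrite length_firstn; [|lia].
      replace (Init.Nat.min c (length env)) with c by lia.
      replace (S (S i) - c)%nat with (S (S (i - c))) by lia.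
      simpl. rewrite nth_skipn. f_equal. lia.
  - rewrite IHe1, IHe2 by auto.
    induction (den e1 env); simpl; auto.
    rewrite <- IHn.
    match goal with |- den _ (?h :: _) = _ =>
      pose proof (IHe3 (S (S c)) (h :: n :: env) a b) as HH end.
    simpl in HH. apply HH. lia.
Qed.

Lemma den_lift0 e h m env : den (lift 0 e) (h :: m :: env) = den e env.
Proof. apply (den_lift_gen e 0 env h m). lia. Qed.

Opaque Cantor.to_nat Cantor.of_nat.

Definition EOne := ESucc EZero.
Fixpoint EConst (k : nat) : E := match k with 0%nat => EZero | S k => ESucc (EConst k) end.
Definition EPred x := EIter x EZero (EVar 1).
Definition EAdd a b := EIter b a (ESucc (EVar 0)).
Definition ESub a b := EIter b a (EPred (EVar 0)).
Definition EMul a b := EIter b EZero (EAdd (EVar 0) (lift 0 a)).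
Definition EIfz c a b := EIter c a (lift 0 b).
Definition EIf c a b := EIfz c b a.
Definition ELt a b := EIfz (ESub (ESucc a) b) EOne EZero.
Definition EEq a b := EIfz (ESub a b) (EIfz (ESub b a) EOne EZero) EZero.
Definition ELet a body := EIter EOne a body.

Lemma den_EOne env : den EOne env = 1%nat. Proof. reflexivity. Qed.
Lemma den_EConst k env : den (EConst k) env = k. Proof. induction k; simpl; auto. Qed.
Lemma den_EPred x env : den (EPred x) env = pred (den x env).
Proof. unfold EPred; simpl. destruct (den x env); reflexivity. Qed.
Lemma den_EAdd a b env : den (EAdd a b) env = (den a env + den b env)%nat.
Proof. unfold EAdd; simpl. induction (den b env); simpl; lia. Qed.
Lemma den_ESub a b env : den (ESub a b) env = (den a env - den b env)%nat.
Proof. unfold ESub; cbn [den]. induction (den b env); cbn [nat_rect]; [lia|].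
  rewrite den_EPred. cbn [den nth]. rewrite IHn. lia. Qed.
Lemma den_EMul a b env : den (EMul a b) env = (den a env * den b env)%nat.
Proof. unfold EMul; cbn [den]. induction (den b env); cbn [nat_rect]; [lia|].
  rewrite den_EAdd. cbn [den nth]. rewrite den_lift0, IHn. lia. Qed.
Lemma den_EIfz c a b env : den (EIfz c a b) env =
  match den c env with 0%nat => den a env | S _ => den b env end.
Proof. unfold EIfz; simpl. destruct (den c env); simpl; auto. apply den_lift0. Qed.
Lemma den_EIf c a b env : den (EIf c a b) env =
  match den c env with 0%nat => den b env | S _ => den a env end.
Proof. apply den_EIfz. Qed.
Lemma den_ELt a b env : den (ELt a b) env = if Nat.ltb (den a env) (den b env) then 1%nat else 0%nat.
Proof. unfold ELt. rewrite den_EIfz, den_ESub. cbn [den].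
  destruct (Nat.ltb_spec (den a env) (den b env)).
  - replace (S (den a env) - den b env)%nat with 0%nat by lia. reflexivity.
  - replace (S (den a env) - den b env)%nat with (S (den a env - den b env)) by lia. reflexivity.
Qed.
Lemma den_EEq a b env : den (EEq a b) env = if Nat.eqb (den a env) (den b env) then 1%nat else 0%nat.
Proof. unfold EEq. rewrite !den_EIfz, !den_ESub.
  destruct (Nat.eqb_spec (den a env) (den b env)).
  - rewrite e. rewrite Nat.sub_diag. reflexivity.
  - destruct (Nat.lt_ge_cases (den a env) (den b env)).
    + replace (den a env - den b env)%nat with 0%nat by lia.
      replace (den b env - den a env)%nat with (S (den b env - den a env - 1)) by lia. reflexivity.
    + replace (den a env - den b env)%nat with (S (den a env - den b env - 1)) by lia. reflexivity.
Qed.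
Lemma den_ELet a body env : den (ELet a body) env = den body (den a env :: 0%nat :: env).
Proof. reflexivity. Qed.

Global Opaque EOne EPred EAdd ESub EMul EIfz EIf ELt EEq ELet.
Ltac dsimp := repeat (simpl; rewrite ?den_EOne, ?den_EConst, ?den_EPred, ?den_EAdd, ?den_ESub,
  ?den_EMul, ?den_EIfz, ?den_EIf, ?den_ELt, ?den_EEq, ?den_ELet, ?den_lift0).

Definition tlc c := snd (Cantor.of_nat (pred c)).
Definition hdc c := fst (Cantor.of_nat (pred c)).
Fixpoint tln (i c : nat) : nat := match i with 0%nat => c | S i => tlc (tln i c) end.
Definition ETl c := ESnd (EPred c).
Definition EHd c := EFst (EPred c).
Definition ETlN i c := EIter i c (ETl (EVar 0)).
Lemma den_ETl c env : den (ETl c) env = tlc (den c env).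
Proof. unfold ETl; dsimp. reflexivity. Qed.
Lemma den_EHd c env : den (EHd c) env = hdc (den c env).
Proof. unfold EHd; dsimp. reflexivity. Qed.
Lemma den_ETlN i c env : den (ETlN i c) env = tln (den i env) (den c env).
Proof. unfold ETlN; cbn [den]. induction (den i env); cbn [nat_rect tln]; auto. rewrite den_ETl; cbn [den nth]; congruence. Qed.
Global Opaque ETl EHd ETlN.

Definition cs (p : baire) (i m : nat) : nat := code_list (map p (seq i m)).

Lemma prefix_map p k : prefix p k = map p (seq 0 k).
Proof. induction k; [reflexivity|]. cbn [prefix]. rewrite IHk, seq_S, map_app. reflexivity. Qed.

Lemma tl_cs p i m : tlc (cs p i m) = cs p (S i) (pred m).
Proof.
  destruct m; unfold cs, tlc; simpl. reflexivity.
  rewrite Cantor.cancel_of_to. reflexivity.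
Qed.
Lemma hd_cs p i m : (0 < m)%nat -> hdc (cs p i m) = p i.
Proof. destruct m; [lia|]. intros _. unfold cs, hdc; simpl. rewrite Cantor.cancel_of_to. reflexivity. Qed.
Lemma tln_cs p i m j : tln j (cs p i m) = cs p (i + j) (m - j).
Proof.
  induction j; simpl. rewrite Nat.add_0_r, Nat.sub_0_r; auto.
  rewrite IHj, tl_cs. f_equal; lia.
Qed.
Lemma cs_zero p i m : cs p i m = 0%nat <-> m = 0%nat.
Proof. destruct m; unfold cs; simpl; split; auto; discriminate. Qed.
Lemma code_ge l : (length l <= code_list l)%nat.
Proof. induction l; simpl; auto. pose proof (Cantor.to_nat_non_decreasing a (code_list l)). lia. Qed.
Lemma cs_ge p i m : (m <= cs p i m)%nat.
Proof. unfold cs. pose proof (code_ge (map p (seq i m))). rewrite length_map, length_seq in H. auto. Qed.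

Opaque Cantor.to_nat Cantor.of_nat.

Lemma prefix_cs p k : code_list (prefix p k) = cs p 0 k.
Proof. rewrite prefix_map. reflexivity. Qed.

Definition ELenIs c j := EIfz (ETlN j c) (EIfz j EOne (EIf (ETlN (EPred j) c) EOne EZero)) EZero.

Lemma cs0 p i : cs p i 0 = 0%nat. Proof. reflexivity. Qed.
Lemma cs_pos p i m : (0 < m)%nat -> exists v, cs p i m = S v.
Proof. destruct m; [lia|]. intros _. unfold cs; simpl. eauto. Qed.

Lemma den_ELenIs c j env p k : den c env = cs p 0 k ->
  den (ELenIs c j) env = if Nat.eqb k (den j env) then 1%nat else 0%nat.
Proof.
  intros Hc. unfold ELenIs. dsimp. rewrite !den_ETlN, Hc, !tln_cs. dsimp. simpl Nat.add.
  destruct (le_lt_dec k (den j env)).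
  - replace (k - den j env)%nat with 0%nat by lia. rewrite cs0.
    destruct (den j env) as [|j'] eqn:Ej.
    + simpl. destruct k; [reflexivity|lia].
    + simpl. destruct (Nat.eqb_spec k (S j')).
      * destruct (cs_pos p j' (k - j')) as [v Hv]; [lia|]. rewrite Hv. reflexivity.
      * replace (k - j')%nat with 0%nat by lia. reflexivity.
  - destruct (cs_pos p (den j env) (k - den j env)) as [v Hv]; [lia|]. rewrite Hv.
    destruct (Nat.eqb_spec k (den j env)); [lia|reflexivity].
Qed.
Global Opaque ELenIs.

Definition MSucc : E :=
  EIf (ELenIs (EVar 0) (ESucc (EVar 1))) (ESucc (ESucc (EHd (ETlN (EVar 1) (EVar 0))))) EZero.

Lemma Phi_MSucc p : Phi (mach MSucc) p (fun n => S (p n)).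
Proof.
  apply Phi_of. intros n.
  assert (H : forall k, den MSucc [code_list (prefix p k); n] =
     if Nat.eqb k (S n) then S (S (p n)) else 0%nat).
  { intros k. unfold MSucc. rewrite den_EIf. rewrite prefix_cs.
    rewrite (den_ELenIs _ _ _ p k) by reflexivity. cbn [den nth].
    destruct (Nat.eqb_spec k (S n)); auto. subst.
    rewrite den_EHd, den_ETlN. cbn [den nth]. rewrite tln_cs, hd_cs by lia. reflexivity. }
  split.
  - exists (S n). rewrite H, Nat.eqb_refl. reflexivity.
  - intros k v Hv. rewrite H in Hv. destruct (Nat.eqb k (S n)); congruence.
Qed.

Definition ELen c := EIter c EZero (EIfz (ETlN (EVar 1) (lift 0 c)) (EVar 0) (ESucc (EVar 0))).
Fixpoint nzc (p : baire) (N : nat) : nat :=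
  match N with 0%nat => 0%nat | S N => (nzc p N + (if Nat.eqb (p N) 0 then 0 else 1))%nat end.
Definition ECnt c := EIter c EZero (EIfz (ETlN (EVar 1) (lift 0 c)) (EVar 0)
   (EIfz (EHd (ETlN (EVar 1) (lift 0 c))) (EVar 0) (ESucc (EVar 0)))).

Lemma den_ELen c env p k : den c env = cs p 0 k -> den (ELen c) env = k.
Proof.
  intros Hc. unfold ELen. cbn [den]. rewrite Hc.
  assert (forall N, nat_rect (fun _ => nat) 0%nat
     (fun m h => den (EIfz (ETlN (EVar 1) (lift 0 c)) (EVar 0) (ESucc (EVar 0))) (h :: m :: env)) N
     = Nat.min N k).
  { induction N; cbn [nat_rect]; auto. rewrite den_EIfz, den_ETlN. cbn [den nth].
    rewrite den_lift0, Hc, tln_cs. rewrite IHN. simpl Nat.add.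
    destruct (le_lt_dec k N).
    - replace (k - N)%nat with 0%nat by lia. rewrite cs0. lia.
    - destruct (cs_pos p N (k - N)) as [v Hv]; [lia|]. rewrite Hv. lia. }
  rewrite H. pose proof (cs_ge p 0 k). lia.
Qed.

Lemma den_ECnt c env p k : den c env = cs p 0 k -> den (ECnt c) env = nzc p k.
Proof.
  intros Hc. unfold ECnt. cbn [den]. rewrite Hc.
  assert (forall N, nat_rect (fun _ => nat) 0%nat
     (fun m h => den (EIfz (ETlN (EVar 1) (lift 0 c)) (EVar 0)
   (EIfz (EHd (ETlN (EVar 1) (lift 0 c))) (EVar 0) (ESucc (EVar 0)))) (h :: m :: env)) N
     = nzc p (Nat.min N k)).
  { induction N; cbn [nat_rect]; auto. rewrite den_EIfz, den_ETlN. cbn [den nth].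
    rewrite den_lift0, Hc, tln_cs. rewrite IHN. simpl Nat.add.
    destruct (le_lt_dec k N).
    - replace (k - N)%nat with 0%nat by lia. rewrite cs0. f_equal. lia.
    - destruct (cs_pos p N (k - N)) as [v Hv]; [lia|]. rewrite Hv.
      rewrite den_EIfz, den_EHd, den_ETlN. cbn [den nth]. rewrite den_lift0, Hc, tln_cs. simpl Nat.add.
      rewrite hd_cs by lia. simpl Nat.add.
      replace (Nat.min (S N) k) with (S (Nat.min N k)) by lia. cbn [nzc].
      replace (Nat.min N k) with N by lia.
      destruct (p N); simpl; lia. }
  rewrite H. pose proof (cs_ge p 0 k). f_equal. lia.
Qed.
Global Opaque ELen ECnt.

Definition MDec : E :=
  ELet (ELen (EVar 0))
   (EIfz (EVar 0) EZero
     (ELet (EHd (ETlN (EPred (EVar 0)) (EVar 2)))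
       (EIfz (EVar 0) EZero
          (EIf (EEq (ECnt (EVar 4)) (ESucc (EVar 5))) (EVar 0) EZero)))).

Lemma den_MDec p k n : den MDec [cs p 0 k; n] =
  match k with 0%nat => 0%nat | S k' =>
    match p k' with 0%nat => 0%nat | S v => if Nat.eqb (nzc p k) (S n) then S v else 0%nat end end.
Proof.
  unfold MDec. rewrite den_ELet. rewrite (den_ELen _ _ p k) by reflexivity.
  rewrite den_EIfz. cbn [den nth]. destruct k as [|k']; auto.
  rewrite den_ELet, den_EHd, den_ETlN, den_EPred. cbn [den nth pred].
  rewrite tln_cs, hd_cs by lia. simpl Nat.add.
  rewrite den_EIfz. cbn [den nth]. destruct (p k') eqn:Ep; auto.
  rewrite den_EIf, den_EEq, (den_ECnt _ _ p (S k')) by reflexivity. cbn [den nth].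
  destruct (Nat.eqb (nzc p (S k')) (S n)); reflexivity.
Qed.
Global Opaque MDec.

Lemma nzc_const p a b : (forall i, (a <= i < b)%nat -> p i = 0%nat) -> (a <= b)%nat -> nzc p b = nzc p a.
Proof.
  intros H Hab. induction b; [f_equal; lia|].
  destruct (Nat.eq_dec a (S b)); [subst; auto|].
  cbn [nzc]. rewrite IHb; [| intros; apply H; lia | lia].
  rewrite (H b) by lia. simpl. lia.
Qed.

Lemma minus1_mono (s : nat -> nat) : (forall n, (s n < s (S n))%nat) -> forall m m', (m < m')%nat -> (s m < s m')%nat.
Proof.
  intros H m m' Hm. induction Hm; auto. specialize (H m0). lia.
Qed.

Lemma nzc_s p s : (forall n, (s n < s (S n))%nat) -> (forall i, p i <> 0%nat <-> exists n, s n = i) ->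
  forall n, nzc p (S (s n)) = S n.
Proof.
  intros Hs Hp. assert (Hm := minus1_mono s Hs).
  assert (Hnz : forall n, p (s n) <> 0%nat) by (intros n; apply Hp; eauto).
  induction n.
  - cbn [nzc]. rewrite (nzc_const p 0 (s 0%nat)).
    + simpl. destruct (Nat.eqb_spec (p (s 0%nat)) 0); [exfalso; apply (Hnz 0%nat); auto|]. reflexivity.
    + intros i Hi. destruct (Nat.eq_dec (p i) 0); auto. exfalso. apply Hp in n as [m Hm'].
      destruct m; [lia|]. specialize (Hm 0%nat (S m)). lia.
    + lia.
  - cbn [nzc]. rewrite (nzc_const p (S (s n)) (s (S n))).
    + rewrite IHn. destruct (Nat.eqb_spec (p (s (S n))) 0); [exfalso; apply (Hnz (S n)); auto|]. lia.
    + intros i Hi. destruct (Nat.eq_dec (p i) 0); auto. exfalso. apply Hp in n0 as [m Hm'].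
      destruct (Nat.lt_trichotomy m n) as [C|[C|C]].
      * specialize (Hm _ _ C). lia.
      * subst. lia.
      * destruct (Nat.eq_dec m (S n)); [subst; lia|]. specialize (Hm (S n) m ltac:(lia)). lia.
    + apply Hs.
Qed.

Lemma Phi_MDec p q : minus1 p q -> Phi (mach MDec) p q.
Proof.
  intros [s [Hs [Hp Hq]]]. apply Phi_of. intros n. setoid_rewrite prefix_cs.
  split.
  - exists (S (s n)). rewrite den_MDec. destruct (p (s n)) eqn:E.
    + exfalso. assert (p (s n) <> 0%nat) by (apply Hp; eauto). auto.
    + rewrite nzc_s by auto. rewrite Nat.eqb_refl. rewrite Hq, E. f_equal; lia.
  - intros k v Hv. rewrite den_MDec in Hv. destruct k as [|k]; [discriminate|].
    destruct (p k) eqn:E; [discriminate|].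
    destruct (Nat.eqb_spec (nzc p (S k)) (S n)); [|discriminate]. injection Hv as <-.
    assert (p k <> 0%nat) by congruence. apply Hp in H as [m Hm]. subst k.
    rewrite nzc_s in e by auto. injection e as ->. rewrite Hq, E. lia.
Qed.

Opaque Cantor.to_nat Cantor.of_nat.
Open Scope R_scope.

Definition qc r := fst (Cantor.of_nat (fst (Cantor.of_nat r))).
Definition qd r := snd (Cantor.of_nat (fst (Cantor.of_nat r))).
Definition qb r := S (snd (Cantor.of_nat r)).
Definition qv r : R := (INR (qc r) - INR (qd r)) / INR (qb r).
Definition mkq (c d b : nat) : nat := Cantor.to_nat (Cantor.to_nat (c, d), pred b).

Lemma qc_mk c d b : qc (mkq c d b) = c.
Proof. unfold qc, mkq. rewrite Cantor.cancel_of_to; simpl; rewrite Cantor.cancel_of_to. reflexivity. Qed.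
Lemma qd_mk c d b : qd (mkq c d b) = d.
Proof. unfold qd, mkq. rewrite Cantor.cancel_of_to; simpl; rewrite Cantor.cancel_of_to. reflexivity. Qed.
Lemma qb_mk c d b : (0 < b)%nat -> qb (mkq c d b) = b.
Proof. unfold qb, mkq. rewrite !Cantor.cancel_of_to. simpl. lia. Qed.
Lemma qb_pos r : 0 < INR (qb r).
Proof. unfold qb. apply lt_0_INR. lia. Qed.

Lemma nuQ_qv r : Q2R (nuQ r) = qv r.
Proof.
  unfold nuQ, qv, qc, qd, qb. destruct (Cantor.of_nat r) as [a b]. simpl.
  destruct (Cantor.of_nat a) as [c d]. simpl. unfold Q2R. simpl.
  rewrite minus_IZR, <- !INR_IZR_INZ.
  replace (IZR (Z.pos (Pos.of_succ_nat b))) with (INR (S b)).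
  reflexivity. rewrite Zpos_P_of_succ_nat, INR_IZR_INZ. f_equal.
  rewrite Nat2Z.inj_succ. reflexivity.
Qed.

Definition qaddf x y := mkq (qc x * qb y + qc y * qb x) (qd x * qb y + qd y * qb x) (qb x * qb y).
Definition qnegf x := mkq (qd x) (qc x) (qb x).
Definition qltb x y := Nat.ltb (qc x * qb y + qd y * qb x) (qc y * qb x + qd x * qb y).

Lemma qv_add x y : qv (qaddf x y) = qv x + qv y.
Proof.
  unfold qaddf, qv. rewrite qc_mk, qd_mk, qb_mk by (unfold qb; lia).
  pose proof (qb_pos x); pose proof (qb_pos y).
  rewrite !plus_INR, !mult_INR. field. lra.
Qed.
Lemma qv_neg x : qv (qnegf x) = - qv x.
Proof.
  unfold qnegf, qv. rewrite qc_mk, qd_mk, qb_mk by (unfold qb; lia).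
  pose proof (qb_pos x). field. lra.
Qed.
Lemma qltb_spec x y : qltb x y = true <-> qv x < qv y.
Proof.
  unfold qltb, qv. pose proof (qb_pos x); pose proof (qb_pos y).
  set (A := INR (qc x)); set (B := INR (qd x)); set (C := INR (qc y)); set (D := INR (qd y)).
  rewrite Nat.ltb_lt. split; intro H1.
  - apply lt_INR in H1. rewrite !plus_INR, !mult_INR in H1. fold A B C D in H1.
    apply (Rmult_lt_reg_r (INR (qb x) * INR (qb y))). nra.
    replace ((A - B) / INR (qb x) * (INR (qb x) * INR (qb y))) with ((A - B) * INR (qb y)) by (field; lra).
    replace ((C - D) / INR (qb y) * (INR (qb x) * INR (qb y))) with ((C - D) * INR (qb x)) by (field; lra).
    lra.
  - apply INR_lt. rewrite !plus_INR, !mult_INR. fold A B C D.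
    apply (Rmult_lt_compat_r (INR (qb x) * INR (qb y))) in H1; [|nra].
    replace ((A - B) / INR (qb x) * (INR (qb x) * INR (qb y))) with ((A - B) * INR (qb y)) in H1 by (field; lra).
    replace ((C - D) / INR (qb y) * (INR (qb x) * INR (qb y))) with ((C - D) * INR (qb x)) in H1 by (field; lra).
    lra.
Qed.

Definition EQc r := EFst (EFst r).
Definition EQd r := ESnd (EFst r).
Definition EQb r := ESucc (ESnd r).
Definition EMkq c d b := EPair (EPair c d) (EPred b).
Definition EQAdd x y := ELet x (ELet (lift 0 y)
   (EMkq (EAdd (EMul (EQc (EVar 2)) (EQb (EVar 0))) (EMul (EQc (EVar 0)) (EQb (EVar 2))))
         (EAdd (EMul (EQd (EVar 2)) (EQb (EVar 0))) (EMul (EQd (EVar 0)) (EQb (EVar 2))))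
         (EMul (EQb (EVar 2)) (EQb (EVar 0))))).
Definition EQNeg x := ELet x (EMkq (EQd (EVar 0)) (EQc (EVar 0)) (EQb (EVar 0))).
Definition EQLt x y := ELet x (ELet (lift 0 y)
   (ELt (EAdd (EMul (EQc (EVar 2)) (EQb (EVar 0))) (EMul (EQd (EVar 0)) (EQb (EVar 2))))
        (EAdd (EMul (EQc (EVar 0)) (EQb (EVar 2))) (EMul (EQd (EVar 2)) (EQb (EVar 0)))))).

Lemma den_EQAdd x y env : den (EQAdd x y) env = qaddf (den x env) (den y env).
Proof. unfold EQAdd, EMkq, EQc, EQd, EQb. dsimp. reflexivity. Qed.
Lemma den_EQNeg x env : den (EQNeg x) env = qnegf (den x env).
Proof. unfold EQNeg, EMkq, EQc, EQd, EQb. dsimp. reflexivity. Qed.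
Lemma den_EQLt x y env : den (EQLt x y) env = if qltb (den x env) (den y env) then 1%nat else 0%nat.
Proof. unfold EQLt, EQc, EQd, EQb. dsimp. reflexivity. Qed.
Global Opaque EQAdd EQNeg EQLt.

Definition bcen b := fst (Cantor.of_nat b).
Definition brad b := snd (Cantor.of_nat b).
Definition tb (fl : bool) b := if fl then Cantor.to_nat (qnegf (bcen b), brad b) else b.
Definition inballb x b : bool :=
  andb (qltb (qaddf x (qnegf (bcen b))) (brad b)) (qltb (qaddf (bcen b) (qnegf x)) (brad b)).
Definition rightf b := qaddf (bcen b) (brad b).
Definition stepf fl (ent : nat -> nat) m x :=
  match ent m with 0%nat => x | S e => if inballb x (tb fl e) then rightf (tb fl e) else x end.
Definition passf fl ent k x := nat_rect (fun _ => nat) x (fun m h => stepf fl ent m h) k.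
Definition sweepf fl ent k x0 := nat_rect (fun _ => nat) x0 (fun _ h => passf fl ent k h) k.
Definition shn (sh : bool) v := if sh then S v else v.
Definition entf sh c m := shn sh (hdc (tln m c)).
Definition EShift (sh : bool) e := if sh then ESucc e else e.
Lemma den_EShift sh e env : den (EShift sh e) env = shn sh (den e env).
Proof. destruct sh; reflexivity. Qed.

Definition ETB (fl : bool) b := if fl then EPair (EQNeg (EFst b)) (ESnd b) else b.
Definition EInBall x b := ELet x (ELet (lift 0 b)
  (EMul (EQLt (EQAdd (EVar 2) (EQNeg (EFst (EVar 0)))) (ESnd (EVar 0)))
        (EQLt (EQAdd (EFst (EVar 0)) (EQNeg (EVar 2))) (ESnd (EVar 0))))).
Definition ERight b := ELet b (EQAdd (EFst (EVar 0)) (ESnd (EVar 0))).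
Definition EStep fl sh c m x := ELet (EShift sh (EHd (ETlN m c)))
  (EIfz (EVar 0) (lift 0 x)
    (ELet (ETB fl (EPred (EVar 0)))
       (EIf (EInBall (lift 0 (lift 0 x)) (EVar 0)) (ERight (EVar 0)) (lift 0 (lift 0 x))))).
Definition EPass fl sh c k x := EIter k x (EStep fl sh (lift 0 c) (EVar 1) (EVar 0)).
Definition ESweep fl sh c k x0 := EIter k x0 (EPass fl sh (lift 0 c) (lift 0 k) (EVar 0)).

Lemma den_ETB fl b env : den (ETB fl b) env = tb fl (den b env).
Proof. destruct fl; unfold ETB, tb; dsimp; rewrite ?den_EQNeg; reflexivity. Qed.
Lemma den_EInBall x b env : den (EInBall x b) env = if inballb (den x env) (den b env) then 1%nat else 0%nat.
Proof. unfold EInBall, inballb. dsimp. rewrite !den_EQLt, !den_EQAdd, !den_EQNeg. cbn [den nth].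
  unfold bcen, brad. destruct (qltb _ _); destruct (qltb _ _); reflexivity. Qed.
Lemma den_ERight b env : den (ERight b) env = rightf (den b env).
Proof. unfold ERight. dsimp. rewrite den_EQAdd. reflexivity. Qed.
Lemma den_EStep fl sh c m x env : den (EStep fl sh c m x) env = stepf fl (entf sh (den c env)) (den m env) (den x env).
Proof. unfold EStep, stepf, entf. rewrite den_ELet, den_EShift, den_EHd, den_ETlN, den_EIfz. cbn [den nth].
  destruct (shn sh (hdc (tln (den m env) (den c env)))). rewrite den_lift0; reflexivity.
  rewrite den_ELet, den_ETB, den_EPred. cbn [den nth pred]. rewrite den_EIf, den_EInBall, !den_lift0.
  cbn [den nth]. destruct (inballb _ _). rewrite den_ERight. reflexivity. rewrite ?den_lift0; reflexivity. Qed.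
Lemma den_EPass fl sh c k x env : den (EPass fl sh c k x) env = passf fl (entf sh (den c env)) (den k env) (den x env).
Proof. unfold EPass, passf. cbn [den]. induction (den k env); cbn [nat_rect]; auto.
  rewrite den_EStep. cbn [den nth]. rewrite den_lift0, IHn. reflexivity. Qed.
Lemma den_ESweep fl sh c k x0 env : den (ESweep fl sh c k x0) env = sweepf fl (entf sh (den c env)) (den k env) (den x0 env).
Proof. unfold ESweep, sweepf. cbn [den].
  assert (forall N, nat_rect (fun _ => nat) (den x0 env)
      (fun m h => den (EPass fl sh (lift 0 c) (lift 0 k) (EVar 0)) (h :: m :: env)) N =
      nat_rect (fun _ => nat) (den x0 env) (fun _ h => passf fl (entf sh (den c env)) (den k env) h) N) as HH.
  { induction N; cbn [nat_rect]; auto. rewrite den_EPass. cbn [den nth]. rewrite !den_lift0, IHN. reflexivity. }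
  apply HH. Qed.
Global Opaque EShift ETB EInBall ERight EStep EPass ESweep.

Opaque Cantor.to_nat Cantor.of_nat.
Open Scope R_scope.

Lemma inballb_spec x b : inballb x b = true <-> Rabs (qv x - qv (bcen b)) < qv (brad b).
Proof.
  unfold inballb. rewrite Bool.andb_true_iff, !qltb_spec, !qv_add, !qv_neg.
  unfold Rabs; destruct (Rcase_abs _); split; intros; try lra.
Qed.
Lemma qv_right b : qv (rightf b) = qv (bcen b) + qv (brad b).
Proof. unfold rightf. apply qv_add. Qed.

Fixpoint cntb (f : nat -> bool) (n : nat) : nat :=
  match n with 0%nat => 0%nat | S n => (cntb f n + if f n then 1 else 0)%nat end.
Lemma cntb_le f g n : (forall i, (i < n)%nat -> f i = true -> g i = true) -> (cntb f n <= cntb g n)%nat.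
Proof.
  induction n; simpl; intros H; auto.
  assert (IH : (cntb f n <= cntb g n)%nat) by (apply IHn; intros i Hi; apply H; lia).
  assert (Hn : f n = true -> g n = true) by (apply H; lia).
  destruct (f n); destruct (g n); try lia.
Qed.
Lemma cntb_lt f g n j : (forall i, (i < n)%nat -> f i = true -> g i = true) -> (j < n)%nat ->
  f j = false -> g j = true -> (cntb f n < cntb g n)%nat.
Proof.
  induction n; simpl; intros H Hj Hf Hg; [lia|].
  destruct (Nat.eq_dec j n).
  - subst. rewrite Hf, Hg.
    assert (IH : (cntb f n <= cntb g n)%nat) by (apply cntb_le; intros i Hi; apply H; lia). lia.
  - assert (IH : (cntb f n < cntb g n)%nat) by (apply IHn; auto; try lia; intros i Hi; apply H; lia).
    assert (Hn : f n = true -> g n = true) by (apply H; lia).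
    destruct (f n); destruct (g n); try lia.
Qed.
Lemma cntb_max f n : (cntb f n <= n)%nat.
Proof. induction n; simpl; auto. destruct (f n); lia. Qed.
Lemma cntb_zero f n j : cntb f n = 0%nat -> (j < n)%nat -> f j = false.
Proof.
  induction n; simpl; intros H Hj; [lia|]. destruct (Nat.eq_dec j n).
  - subst. destruct (f n); auto; lia.
  - apply IHn; lia.
Qed.

Section Sweep.
Variable p : nat -> nat.
Variable k : nat.
Variable fl : bool.
Definition bcd i := tb fl (pred (p i)).
Definition inB i y := (i < k)%nat /\ p i <> 0%nat /\ Rabs (y - qv (bcen (bcd i))) < qv (brad (bcd i)).
Definition endp i := qv (bcen (bcd i)) + qv (brad (bcd i)).
Definition alive i y : bool := andb (negb (Nat.eqb (p i) 0)) (if Rlt_dec y (endp i) then true else false).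
Definition alivec y := cntb (fun i => alive i y) k.
Definition covered s y := forall z, s <= z < y -> exists i, inB i z.

Lemma alive_mono y y' i : y <= y' -> alive i y' = true -> alive i y = true.
Proof.
  unfold alive. intros Hy H. apply Bool.andb_true_iff in H as [H1 H2]. rewrite H1.
  destruct (Rlt_dec y' (endp i)); [|discriminate]. destruct (Rlt_dec y (endp i)); auto. lra.
Qed.
Lemma inB_alive i y : inB i y -> alive i y = true.
Proof.
  unfold inB, alive. intros [Hi [Hp Hb]]. destruct (Nat.eqb_spec (p i) 0); [lia|]. simpl.
  destruct (Rlt_dec y (endp i)); auto. exfalso. unfold endp in n0. unfold Rabs in Hb.
  destruct (Rcase_abs _); lra.
Qed.
Lemma alivec_mono y y' : y <= y' -> (alivec y' <= alivec y)%nat.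
Proof. intros H. apply cntb_le. intros i _. apply alive_mono; auto. Qed.

Lemma step_val m x : (m < k)%nat ->
  (inB m (qv x) /\ stepf fl p m x = rightf (bcd m)) \/ (~ inB m (qv x) /\ stepf fl p m x = x).
Proof.
  intros Hm. unfold stepf.
  destruct (p m) eqn:Ep.
  - right. split; auto. unfold inB. intros [_ [H _]]; auto.
  - destruct (inballb x (tb fl n)) eqn:Eb.
    + left. apply inballb_spec in Eb. unfold inB, bcd. rewrite Ep. simpl. repeat split; auto; lia.
    + right. split; auto. unfold inB, bcd. rewrite Ep. simpl. intros [_ [_ HH]].
      apply inballb_spec in HH. congruence.
Qed.

Lemma pass_inv x s : covered s (qv x) -> forall m, (m <= k)%nat ->
  let h := nat_rect (fun _ => nat) x (fun m h => stepf fl p m h) m in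
  qv x <= qv h /\ covered s (qv h) /\
  ((h = x /\ forall i, (i < m)%nat -> ~ inB i (qv x)) \/
   ((exists i, inB i (qv x)) /\ (alivec (qv h) < alivec (qv x))%nat)).
Proof.
  intros Hcov. induction m; intros Hm h; subst h; cbn [nat_rect].
  - split; [lra|]. split; auto. left. split; auto. intros; lia.
  - destruct (IHm ltac:(lia)) as [I1 [I2 I3]].
    set (h := nat_rect (fun _ => nat) x (fun m h => stepf fl p m h) m) in *.
    destruct (step_val m h ltac:(lia)) as [[Hin Hs]|[Hin Hs]]; rewrite Hs.
    + assert (Hh : qv h < qv (rightf (bcd m))).
      { rewrite qv_right. destruct Hin as [_ [_ Hb]]. unfold Rabs in Hb; destruct (Rcase_abs _); lra. }
      split; [lra|]. split.
      * intros z Hz. destruct (Rlt_dec z (qv h)). apply I2; lra.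
        exists m. destruct Hin as [Hm1 [Hm2 Hb]]. split; auto. split; auto.
        rewrite qv_right in Hz. unfold Rabs in *. destruct (Rcase_abs (qv h - _)); destruct (Rcase_abs (z - _)); lra.
      * right. assert (Hlt : (alivec (qv (rightf (bcd m))) < alivec (qv h))%nat).
        { apply (cntb_lt _ _ k m); try lia.
          - intros i _. apply alive_mono. lra.
          - unfold alive. destruct (Rlt_dec _ (endp m)); [|apply Bool.andb_false_r].
            exfalso. unfold endp in r. rewrite qv_right in r. lra.
          - apply inB_alive; auto. }
        destruct I3 as [[Ehx _]|[Hex Hlt2]].
        -- rewrite Ehx in Hin, Hlt. split; [exists m; auto | auto].
        -- split; auto. lia.
    + split; auto. split; auto. destruct I3 as [[Ehx Hno]|Hr]; [left|right; auto].
      split; auto. intros i Hi. destruct (Nat.eq_dec i m). subst i. rewrite Ehx in Hin; auto. apply Hno; lia.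
Qed.

Lemma pass_res x s : covered s (qv x) ->
  qv x <= qv (passf fl p k x) /\ covered s (qv (passf fl p k x)) /\
  ((passf fl p k x = x /\ forall i, ~ inB i (qv x)) \/
   ((exists i, inB i (qv x)) /\ (alivec (qv (passf fl p k x)) < alivec (qv x))%nat)).
Proof.
  intros H. destruct (pass_inv x s H k (le_n _)) as [A1 [A2 A3]]. unfold passf.
  split; auto. split; auto. destruct A3 as [[B1 B2]|B]; [left|right]; auto.
  split; auto. intros i [Hi HH]. apply (B2 i Hi). split; auto.
Qed.

Lemma sweep_res x0 :
  let X := sweepf fl p k x0 in
  qv x0 <= qv X /\ covered (qv x0) (qv X) /\ forall i, ~ inB i (qv X).
Proof.
  assert (forall N, let h := nat_rect (fun _ => nat) x0 (fun _ h => passf fl p k h) N in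
     qv x0 <= qv h /\ covered (qv x0) (qv h) /\
     ((forall i, ~ inB i (qv h)) \/ (alivec (qv h) + N <= k)%nat)).
  { induction N; intros h; subst h; cbn [nat_rect].
    - split; [lra|]. split. intros z Hz; lra. right. unfold alivec. pose proof (cntb_max (fun i => alive i (qv x0)) k). lia.
    - destruct IHN as [I1 [I2 I3]].
      set (h := nat_rect (fun _ => nat) x0 (fun _ h => passf fl p k h) N) in *.
      destruct (pass_res h (qv x0) I2) as [P1 [P2 P3]].
      split; [lra|]. split; auto.
      destruct P3 as [[Q1 Q2]|[Q1 Q2]].
      + left. rewrite Q1. auto.
      + destruct I3 as [I3|I3]. destruct Q1 as [i Hi]. exfalso; eapply I3; eauto.
        right. lia. }
  intros X. unfold X, sweepf. destruct (H k) as [A1 [A2 A3]]. cbv zeta in *. split; auto. split; auto.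
  destruct A3 as [A3|A3]; auto. intros i Hi.
  assert (HZ : alivec (qv (nat_rect (fun _ => nat) x0 (fun _ h => passf fl p k h) k)) = 0%nat) by lia.
  pose proof (inB_alive i _ Hi) as HA. destruct Hi as [Hik _].
  pose proof (cntb_zero _ _ i HZ Hik) as HB. cbv beta in HB. congruence.
Qed.
End Sweep.

Opaque Cantor.to_nat Cantor.of_nat.

Definition EQ1 := EPair (EPair EOne EZero) EZero.
Definition EQM1 := EPair (EPair EZero EOne) EZero.
Definition q1 : nat := Cantor.to_nat (Cantor.to_nat (1%nat, 0%nat), 0%nat).
Definition qm1 : nat := Cantor.to_nat (Cantor.to_nat (0%nat, 1%nat), 0%nat).

Lemma den_EQ1 env : den EQ1 env = q1. Proof. reflexivity. Qed.
Lemma den_EQM1 env : den EQM1 env = qm1. Proof. reflexivity. Qed.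
Global Opaque EQ1 EQM1.

Definition MHull (sh os : bool) : E :=
  ELet (EFst (EVar 1))
   (EIf (ELenIs (EVar 2) (EVar 0))
     (ELet (ESweep false sh (EVar 2) (EVar 0) EZero)
       (ELet (ESweep true sh (EVar 4) (EVar 2) EQM1)
          (EShift os (EIf (EQLt EQ1 (EVar 2)) EOne
             (EIfz (ESnd (EVar 7)) (ESucc (EPair (EQAdd (EVar 2) EQM1) EQ1))
                (EIfz (EPred (ESnd (EVar 7))) (ESucc (EPair (EQAdd EQ1 (EQNeg (EVar 0))) EQ1)) EOne))))))
     EZero).

Definition rM (sh : bool) (p : baire) (n : nat) : nat :=
  let j := fst (Cantor.of_nat n) in let side := snd (Cantor.of_nat n) in
  let e := fun m => shn sh (p m) in
  let X := sweepf false e j 0%nat in let Z := sweepf true e j qm1 in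
  if qltb q1 X then 0%nat else
  match side with
  | 0%nat => Cantor.to_nat (qaddf X qm1, q1)
  | 1%nat => Cantor.to_nat (qaddf q1 (qnegf Z), q1)
  | _ => 0%nat end.

Lemma passf_ext fl e1 e2 k x : (forall m, (m < k)%nat -> e1 m = e2 m) -> passf fl e1 k x = passf fl e2 k x.
Proof.
  intros H. unfold passf. assert (forall N, (N <= k)%nat ->
    nat_rect (fun _ => nat) x (fun m h => stepf fl e1 m h) N = nat_rect (fun _ => nat) x (fun m h => stepf fl e2 m h) N).
  { induction N; intros HN; cbn [nat_rect]; auto. rewrite IHN by lia. unfold stepf. rewrite H by lia. reflexivity. }
  apply H0; lia.
Qed.
Lemma sweepf_ext fl e1 e2 k x : (forall m, (m < k)%nat -> e1 m = e2 m) -> sweepf fl e1 k x = sweepf fl e2 k x.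
Proof.
  intros H. unfold sweepf. assert (forall N, nat_rect (fun _ => nat) x (fun _ h => passf fl e1 k h) N =
    nat_rect (fun _ => nat) x (fun _ h => passf fl e2 k h) N) as HH.
  { induction N; cbn [nat_rect]; auto. rewrite IHN. apply passf_ext; auto. }
  apply HH.
Qed.

Lemma entf_cs sh p k m : (m < k)%nat -> entf sh (cs p 0 k) m = shn sh (p m).
Proof. intros H. unfold entf. rewrite tln_cs, hd_cs by lia. reflexivity. Qed.

Lemma den_MHull sh os p k n : den (MHull sh os) [cs p 0 k; n] =
  if Nat.eqb k (fst (Cantor.of_nat n)) then S (shn os (rM sh p n)) else 0%nat.
Proof.
  unfold MHull. rewrite den_ELet, den_EIf. cbn [den nth].
  rewrite (den_ELenIs _ _ _ p k) by reflexivity. cbn [den nth].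
  destruct (Nat.eqb_spec k (fst (Cantor.of_nat n))) as [Ek|Ek]; [|reflexivity].
  rewrite <- Ek. rewrite !den_ELet, !den_ESweep. cbn [den nth].
  rewrite den_EShift, den_EIf, den_EQLt. cbn [den nth]. rewrite !den_EQ1, !den_EQM1.
  rewrite (sweepf_ext false (entf sh (cs p 0 k)) (fun m => shn sh (p m))) by (intros; apply entf_cs; auto).
  rewrite (sweepf_ext true (entf sh (cs p 0 k)) (fun m => shn sh (p m))) by (intros; apply entf_cs; auto).
  unfold rM. rewrite <- Ek.
  destruct (qltb q1 (sweepf false (fun m => shn sh (p m)) k 0)); [destruct os; reflexivity|].
  repeat progress (cbn [den nth pred]; rewrite ?den_EIfz, ?den_EPred, ?den_EQAdd, ?den_EQNeg, ?den_EQ1, ?den_EQM1, ?den_EOne).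
  destruct (snd (Cantor.of_nat n)) as [|[|side]]; destruct os; reflexivity.
Qed.

Lemma Phi_MHull sh os p : Phi (mach (MHull sh os)) p (fun n => shn os (rM sh p n)).
Proof.
  apply Phi_of. intros n. setoid_rewrite prefix_cs. split.
  - exists (fst (Cantor.of_nat n)). rewrite den_MHull, Nat.eqb_refl. reflexivity.
  - intros k v Hv. rewrite den_MHull in Hv. destruct (Nat.eqb _ _); congruence.
Qed.

Open Scope R_scope.

Lemma lub_below (E : R -> Prop) m w : is_lub E m -> w < m -> exists t, E t /\ w < t.
Proof.
  intros [Hub Hl] Hw. destruct (Classical_Prop.classic (exists t, E t /\ w < t)) as [H|H]; auto.
  exfalso. assert (is_upper_bound E w).
  { intros t Et. destruct (Rle_lt_dec t w); auto. exfalso; apply H; eauto. }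
  specialize (Hl _ H0). lra.
Qed.

Section Conn.
Variable B : R -> Prop.
Hypothesis Hconv : forall u v w, B u -> B w -> u <= v <= w -> B v.

Lemma conn_core (U V : R -> Prop) u v : open_set U -> open_set V ->
  (forall x, B x -> U x \/ V x) -> B u -> U u -> B v -> V v -> u < v ->
  (forall x, ~ (B x /\ U x /\ V x)) -> False.
Proof.
  intros HU HV Hcov Bu Uu Bv Vv Huv Hdis.
  set (S := fun t => u <= t <= v /\ forall w, u <= w <= t -> U w).
  assert (HS : bound S) by (exists v; intros t [Ht _]; lra).
  assert (HSu : exists t, S t) by (exists u; split; [lra|]; intros w Hw; replace w with u by lra; auto).
  destruct (completeness S HS HSu) as [sg Hsg].
  assert (Hu : u <= sg) by (apply (proj1 Hsg); split; [lra|]; intros w Hw; replace w with u by lra; auto).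
  assert (Hv : sg <= v) by (apply (proj2 Hsg); intros t [Ht _]; lra).
  assert (Bs : B sg) by (apply (Hconv u sg v); auto).
  assert (Hbelow : forall w, u <= w < sg -> U w).
  { intros w Hw. destruct (lub_below S sg w Hsg (proj2 Hw)) as [t [[_ Ht] Hwt]]. apply Ht; lra. }
  destruct (Hcov sg Bs) as [Us|Vs].
  - assert (sg <> v) by (intro Heq; rewrite Heq in Us; apply (Hdis v); auto).
    destruct (HU sg Us) as [d Hd].
    set (t := Rmin (sg + d / 2) v).
    assert (S t).
    { split. unfold t, Rmin; destruct (Rle_dec _ _); pose proof (cond_pos d); lra.
      intros w Hw. destruct (Rlt_dec w sg). apply Hbelow; lra.
      apply Hd. unfold disc. pose proof (cond_pos d). unfold t, Rmin in Hw; destruct (Rle_dec _ _);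
      rewrite Rabs_right; lra. }
    pose proof (proj1 Hsg t H0). unfold t, Rmin in H1; destruct (Rle_dec _ _); pose proof (cond_pos d); lra.
  - assert (u <> sg) by (intro Heq; rewrite <- Heq in Vs; apply (Hdis u); auto).
    destruct (HV sg Vs) as [d Hd].
    set (w := Rmax u (sg - d / 2)).
    assert (Hw : u <= w < sg) by (unfold w, Rmax; destruct (Rle_dec _ _); pose proof (cond_pos d); lra).
    apply (Hdis w). split; [apply (Hconv u w v); auto; lra|]. split. apply Hbelow; auto.
    apply Hd. unfold disc. pose proof (cond_pos d). unfold w, Rmax in *; destruct (Rle_dec _ _);
    rewrite Rabs_left; lra.
Qed.

Lemma convex_connected : connected B.
Proof.
  intros [U [V [HU [HV [Hcov [[u [Bu Uu]] [[v [Bv Vv]] Hdis]]]]]]].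
  destruct (Rtotal_order u v) as [H|[H|H]].
  - eapply (conn_core U V u v); eauto.
  - subst. apply (Hdis v); auto.
  - eapply (conn_core V U v u); eauto.
    intros x Bx; destruct (Hcov x Bx); auto.
    intros x [Bx [Vx Ux]]; apply (Hdis x); auto.
Qed.
End Conn.

Lemma compact_cover (a b : R) (W : nat -> R -> Prop) :
  (forall n x, W n x -> exists d, 0 < d /\ forall z, Rabs (z - x) < d -> W n z) ->
  (forall x, a <= x <= b -> exists n, W n x) ->
  exists N, forall x, a <= x <= b -> exists n, (n < N)%nat /\ W n x.
Proof.
  intros Hop Hcov. destruct (Rle_lt_dec a b) as [Hab|Hab]; [|exists 0%nat; intros; lra].
  set (Sset := fun t => a <= t <= b /\ exists N, forall x, a <= x <= t -> exists n, (n < N)%nat /\ W n x).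
  assert (HS : bound Sset) by (exists b; intros t [Ht _]; lra).
  assert (HSa : Sset a).
  { split; [lra|]. destruct (Hcov a) as [n0 Hn0]; [lra|]. exists (S n0). intros x Hx.
    replace x with a by lra. exists n0; split; auto. }
  destruct (completeness Sset HS (ex_intro _ a HSa)) as [sg Hsg].
  assert (Ha : a <= sg) by (apply (proj1 Hsg); auto).
  assert (Hb : sg <= b) by (apply (proj2 Hsg); intros t [Ht _]; lra).
  destruct (Hcov sg) as [m Hm]; [lra|].
  destruct (Hop m sg Hm) as [d [Hd Hdd]].
  assert (Ht : exists t N, a <= t /\ sg - d < t /\ forall x, a <= x <= t -> exists n, (n < N)%nat /\ W n x).
  { destruct (Rlt_dec a (sg - d / 2)).
    - destruct (lub_below Sset sg (sg - d / 2) Hsg ltac:(lra)) as [t [[Ht1 [N HN]] Ht2]]. exists t, N. split; [lra|]. split; [lra|]. auto.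
    - destruct HSa as [_ [N HN]]. exists a, N. split; [lra|]. split; [lra|]. auto. }
  destruct Ht as [t [N [Ht1 [Ht2 HN]]]].
  set (t' := Rmin (sg + d / 2) b).
  assert (St' : Sset t').
  { split. unfold t', Rmin; destruct (Rle_dec _ _); lra.
    exists (Nat.max N (S m)). intros x Hx. destruct (Rle_dec x t).
    - destruct (HN x) as [n [Hn Wn]]; [lra|]. exists n; split; auto. lia.
    - exists m. split; [lia|]. apply Hdd. unfold t', Rmin in Hx; destruct (Rle_dec _ _);
      unfold Rabs; destruct (Rcase_abs _); lra. }
  destruct (Rlt_dec sg b).
  - pose proof (proj1 Hsg t' St'). unfold t', Rmin in H; destruct (Rle_dec _ _); lra.
  - assert (t' = b) by (unfold t', Rmin; destruct (Rle_dec _ _); lra).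
    destruct St' as [_ [N' HN']]. exists N'. intros x Hx. apply HN'. lra.
Qed.

Lemma conn_split (A : R -> Prop) y : connected A -> ~ A y ->
  (forall a, A a -> y < a) \/ (forall a, A a -> a < y).
Proof.
  intros Hc Hy. destruct (Classical_Prop.classic (exists a, A a /\ a < y)) as [[a1 [A1 H1]]|H1].
  - destruct (Classical_Prop.classic (exists a, A a /\ y < a)) as [[a2 [A2 H2]]|H2].
    + exfalso. apply Hc. exists (fun x => x < y), (fun x => y < x).
      split. { intros x Hx. exists (mkposreal (y - x) ltac:(lra)). intros z Hz. unfold disc in Hz. simpl in Hz.
        unfold Rabs in Hz; destruct (Rcase_abs _); lra. }
      split. { intros x Hx. exists (mkposreal (x - y) ltac:(lra)). intros z Hz. unfold disc in Hz. simpl in Hz.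
        unfold Rabs in Hz; destruct (Rcase_abs _); lra. }
      split. { intros x Ax. destruct (Rtotal_order x y) as [?|[?|?]]; auto. subst; contradiction. }
      split; [eauto|]. split; [eauto|]. intros x [_ [? ?]]; lra.
    + right. intros a Aa. destruct (Rtotal_order a y) as [?|[?|?]]; auto. subst; contradiction.
      exfalso; eauto.
  - left. intros a Aa. destruct (Rtotal_order a y) as [?|[?|?]]; auto. exfalso; eauto. subst; contradiction.
Qed.

Opaque Cantor.to_nat Cantor.of_nat.
Open Scope R_scope.

Lemma ball_qv b y : ball b y <-> Rabs (y - qv (bcen b)) < qv (brad b).
Proof. unfold ball, bcen, brad. destruct (Cantor.of_nat b) as [a r]. simpl. rewrite !nuQ_qv. tauto. Qed.

Lemma ball_pair a r y : ball (Cantor.to_nat (a, r)) y <-> Rabs (y - qv a) < qv r.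
Proof. rewrite ball_qv. unfold bcen, brad. rewrite Cantor.cancel_of_to. simpl. tauto. Qed.

Lemma qv0 : qv 0%nat = 0.
Proof. unfold qv, qc, qd, qb. rewrite of_nat0. simpl. rewrite of_nat0. simpl. lra. Qed.
Lemma qv_q1 : qv q1 = 1.
Proof. unfold qv, qc, qd, qb, q1. rewrite Cantor.cancel_of_to. simpl. rewrite Cantor.cancel_of_to. simpl. lra. Qed.
Lemma qv_qm1 : qv qm1 = -1.
Proof. unfold qv, qc, qd, qb, qm1. rewrite Cantor.cancel_of_to. simpl. rewrite Cantor.cancel_of_to. simpl. lra. Qed.

Lemma ball0 y : ~ ball 0%nat y.
Proof. rewrite ball_qv. unfold bcen, brad. rewrite of_nat0. simpl. rewrite qv0. pose proof (Rabs_pos (y - 0)). lra. Qed.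

Lemma bcen_pair a b : bcen (Cantor.to_nat (a, b)) = a.
Proof. unfold bcen. rewrite Cantor.cancel_of_to. reflexivity. Qed.
Lemma brad_pair a b : brad (Cantor.to_nat (a, b)) = b.
Proof. unfold brad. rewrite Cantor.cancel_of_to. reflexivity. Qed.

Section Hull.
Variable sh : bool.
Variable p : baire.
Definition ee m := shn sh (p m).
Definition Xv j := qv (sweepf false ee j 0%nat).
Definition Mv j := - qv (sweepf true ee j qm1).
Definition Cj j y := 0 <= y <= 1 /\ forall i, (i < j)%nat -> ee i <> 0%nat -> ~ ball (pred (ee i)) y.

Lemma inB_false j i y : inB ee j false i y <-> ((i < j)%nat /\ ee i <> 0%nat /\ ball (pred (ee i)) y).
Proof. unfold inB, bcd, tb. cbv beta iota. rewrite ball_qv. tauto. Qed.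
Lemma inB_true j i y : inB ee j true i y <-> ((i < j)%nat /\ ee i <> 0%nat /\ ball (pred (ee i)) (-y)).
Proof. unfold inB, bcd, tb. cbv beta iota. rewrite ball_qv, bcen_pair, brad_pair.
  rewrite qv_neg. replace (y - - qv (bcen (pred (ee i)))) with (- (-y - qv (bcen (pred (ee i))))) by ring.
  rewrite Rabs_Ropp. tauto. Qed.

Lemma X_props j : 0 <= Xv j /\ (forall y, 0 <= y < Xv j -> ~ Cj j y) /\
  (forall i, (i < j)%nat -> ee i <> 0%nat -> ~ ball (pred (ee i)) (Xv j)).
Proof.
  destruct (sweep_res ee j false 0%nat) as [A1 [A2 A3]]. rewrite qv0 in A1, A2. unfold Xv.
  split; auto. split.
  - intros y Hy [_ Hc]. destruct (A2 y Hy) as [i Hi]. apply inB_false in Hi as [Hi1 [Hi2 Hi3]].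
    apply (Hc i); auto.
  - intros i Hi He Hb. apply (A3 i). apply inB_false. auto.
Qed.

Lemma M_props j : Mv j <= 1 /\ (forall y, Mv j < y <= 1 -> ~ Cj j y) /\
  (forall i, (i < j)%nat -> ee i <> 0%nat -> ~ ball (pred (ee i)) (Mv j)).
Proof.
  destruct (sweep_res ee j true qm1) as [A1 [A2 A3]]. rewrite qv_qm1 in A1, A2. unfold Mv.
  split; [lra|]. split.
  - intros y Hy [_ Hc]. destruct (A2 (-y)) as [i Hi]; [lra|]. apply inB_true in Hi as [Hi1 [Hi2 Hi3]].
    rewrite Ropp_involutive in Hi3. apply (Hc i); auto.
  - intros i Hi He Hb. apply (A3 i). apply inB_true. auto.
Qed.

Lemma X_min j y : Cj j y -> Xv j <= y.
Proof. intros H. destruct (X_props j) as [_ [H2 _]]. destruct (Rle_lt_dec (Xv j) y); auto.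
  exfalso. apply (H2 y); auto. destruct H; lra. Qed.
Lemma M_max j y : Cj j y -> y <= Mv j.
Proof. intros H. destruct (M_props j) as [_ [H2 _]]. destruct (Rle_lt_dec y (Mv j)); auto.
  exfalso. apply (H2 y); auto. destruct H; lra. Qed.
Lemma X_in j : Xv j <= 1 -> Cj j (Xv j).
Proof. intros H. destruct (X_props j) as [H1 [_ H3]]. split; [lra|]. auto. Qed.
Lemma M_in j : Xv j <= 1 -> Cj j (Mv j).
Proof. intros H. pose proof (M_max j _ (X_in j H)). destruct (X_props j) as [H1 _].
  destruct (M_props j) as [H4 [_ H6]]. split; [lra|]. auto. Qed.
Lemma Cj_mono j j' y : (j <= j')%nat -> Cj j' y -> Cj j y.
Proof. intros H [H1 H2]. split; auto. intros i Hi. apply H2. lia. Qed.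
Lemma Cj_ne j y : Cj j y -> Xv j <= 1.
Proof. intros H. pose proof (X_min j y H). destruct H; lra. Qed.

Lemma X_le_M j j' : Xv j <= 1 -> Xv j' <= 1 -> Xv j <= Mv j'.
Proof.
  intros H H'. destruct (Nat.le_ge_cases j j').
  - pose proof (X_min j _ (Cj_mono j j' _ H0 (X_in j' H'))).
    pose proof (M_max j' _ (X_in j' H')). lra.
  - pose proof (M_max j _ (X_in j H)).
    pose proof (M_max j' _ (Cj_mono j' j _ H0 (M_in j H))). lra.
Qed.

Lemma X0 : Xv 0%nat = 0.
Proof. unfold Xv, sweepf. simpl. apply qv0. Qed.

Definition Bset y := 0 <= y <= 1 /\ forall n, ~ ball (rM sh p n) y.

Lemma rM_ball j side y : 0 <= y <= 1 ->
  ball (rM sh p (Cantor.to_nat (j, side))) y <->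
  Xv j <= 1 /\ ((side = 0%nat /\ y < Xv j) \/ (side = 1%nat /\ Mv j < y)).
Proof.
  intros Hy. unfold rM. rewrite Cantor.cancel_of_to. simpl. fold ee.
  destruct (qltb q1 (sweepf false ee j 0)) eqn:Eq.
  - apply qltb_spec in Eq. rewrite qv_q1 in Eq. fold (Xv j) in Eq. split; [intro H; apply ball0 in H; tauto | lra].
  - assert (Xv j <= 1). { destruct (Rle_lt_dec (Xv j) 1); auto.
      assert (qltb q1 (sweepf false ee j 0) = true) by (apply qltb_spec; rewrite qv_q1; exact r). congruence. }
    pose proof (X_props j) as [HX _]. pose proof (X_le_M j j H H).
    destruct side as [|[|side]].
    + rewrite ball_pair, qv_add, qv_qm1, qv_q1. fold (Xv j). split.
      * intros HH. split; auto. left. split; auto. unfold Rabs in HH; destruct (Rcase_abs _); lra.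
      * intros [_ [[_ HH]|[HH _]]]; [|discriminate]. unfold Rabs; destruct (Rcase_abs _); lra.
    + rewrite ball_pair, qv_add, qv_neg, qv_q1.
      replace (- qv (sweepf true ee j qm1)) with (Mv j) by reflexivity. split.
      * intros HH. split; auto. right. split; auto. unfold Rabs in HH; destruct (Rcase_abs _); lra.
      * intros [_ [[HH _]|[_ HH]]]; [discriminate|]. unfold Rabs; destruct (Rcase_abs _); lra.
    + split; [intro HH; apply ball0 in HH; tauto|]. intros [_ [[? _]|[? _]]]; discriminate.
Qed.

Lemma Bset_char y : Bset y <-> 0 <= y <= 1 /\ forall j, Xv j <= 1 -> Xv j <= y <= Mv j.
Proof.
  split.
  - intros [Hy Hb]. split; auto. intros j Hj. split.
    + destruct (Rle_lt_dec (Xv j) y); auto. exfalso. apply (Hb (Cantor.to_nat (j, 0%nat))).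
      apply rM_ball; auto.
    + destruct (Rle_lt_dec y (Mv j)); auto. exfalso. apply (Hb (Cantor.to_nat (j, 1%nat))).
      apply rM_ball; auto.
  - intros [Hy Hj]. split; auto. intros n Hn. rewrite <- (Cantor.cancel_to_of n) in Hn.
    destruct (Cantor.of_nat n) as [j side]. apply rM_ball in Hn; auto.
    destruct Hn as [Hx [[_ ?]|[_ ?]]]; specialize (Hj j Hx); lra.
Qed.

Lemma Bset_conv u v w : Bset u -> Bset w -> u <= v <= w -> Bset v.
Proof.
  rewrite !Bset_char. intros [Hu Hu'] [Hw Hw'] Hv. split; [lra|].
  intros j Hj. specialize (Hu' j Hj). specialize (Hw' j Hj). lra.
Qed.

Lemma Bset_ne : exists y, Bset y.
Proof.
  set (Es := fun z => exists j, Xv j <= 1 /\ z = Xv j).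
  assert (Hb : bound Es) by (exists 1; intros z [j [Hj ->]]; auto).
  assert (He : exists z, Es z) by (exists 0; exists 0%nat; rewrite X0; split; lra).
  destruct (completeness Es Hb He) as [al [Hal1 Hal2]].
  exists al. apply Bset_char.
  assert (H0 : 0 <= al) by (apply Hal1; exists 0%nat; rewrite X0; split; lra).
  assert (H1 : al <= 1) by (apply Hal2; intros z [j [Hj ->]]; auto).
  split; [lra|]. intros j Hj. split.
  - apply Hal1. exists j; auto.
  - apply Hal2. intros z [j' [Hj' ->]]. apply X_le_M; auto.
Qed.

Lemma Bset_dom : pdom ConC Bset.
Proof.
  destruct Bset_ne as [y Hy]. exists y. split; auto. split; eauto.
  apply convex_connected. apply Bset_conv.
Qed.

Lemma ball_open b x : ball b x -> exists d, 0 < d /\ forall z, Rabs (z - x) < d -> ball b z.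
Proof.
  rewrite ball_qv. intros H. exists (qv (brad b) - Rabs (x - qv (bcen b))). split; [lra|].
  intros z Hz. rewrite ball_qv.
  pose proof (Rabs_triang (z - x) (x - qv (bcen b))). replace (z - x + (x - qv (bcen b))) with (z - qv (bcen b)) in H0 by ring.
  lra.
Qed.

Lemma Bset_sub q A : minus1 ee q -> (forall x, A x <-> 0 <= x <= 1 /\ forall n, ~ ball (q n) x) ->
  (exists a, A a) -> connected A -> forall y, Bset y -> A y.
Proof.
  intros [s [Hs [Hp Hq]]] HA [a Aa] Hc y By.
  destruct (Classical_Prop.classic (A y)) as [Ay|nAy]; auto. exfalso.
  assert (Hm := minus1_mono s Hs).
  pose proof (proj1 (Bset_char y) By) as [Hy HB].
  assert (HaC : forall j, Cj j a).
  { intros j. apply HA in Aa as [Ha1 Ha2]. split; auto. intros i Hi He Hb.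
    apply Hp in He as [m Hm']. subst i. apply (Ha2 m). rewrite Hq. rewrite Nat.sub_1_r. auto. }
  assert (Hcov : forall lo hi, (forall t, lo <= t <= hi -> ~ A t) -> 0 <= lo -> hi <= 1 ->
     exists j, forall t, lo <= t <= hi -> ~ Cj j t).
  { intros lo hi Hnot Hlo Hhi.
    destruct (compact_cover lo hi (fun n t => ball (q n) t)) as [N HN].
    - intros n x Hx. apply ball_open; auto.
    - intros x Hx. destruct (Classical_Prop.classic (exists n, ball (q n) x)) as [H|H]; auto.
      exfalso. apply (Hnot x Hx). apply HA. split; [lra|]. intros n Hn; apply H; eauto.
    - exists (s N). intros t Ht [_ Hct]. destruct (HN t Ht) as [n [Hn Hb]].
      apply (Hct (s n)). apply Hm; auto. intro H0. assert (ee (s n) <> 0%nat) by (apply Hp; eauto). auto.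
      rewrite Hq, Nat.sub_1_r in Hb. auto. }
  destruct (conn_split A y Hc nAy) as [Hgt|Hlt].
  - destruct (Hcov 0 y) as [j Hj]. intros t Ht At. specialize (Hgt t At). lra. lra. lra.
    pose proof (Cj_ne j a (HaC j)) as Hx. specialize (HB j Hx).
    apply (Hj (Xv j)). pose proof (X_props j) as [? _]. lra. apply X_in; auto.
  - destruct (Hcov y 1) as [j Hj]. intros t Ht At. specialize (Hlt t At). lra. lra. lra.
    pose proof (Cj_ne j a (HaC j)) as Hx. specialize (HB j Hx).
    apply (Hj (Mv j)). pose proof (M_props j) as [? _]. lra. apply M_in; auto.
Qed.
End Hull.

Open Scope R_scope.

Lemma minus1_S (f : baire) : minus1 (fun n => S (f n)) f.
Proof.
  exists (fun n => n). split; [intros; lia|]. split.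
  - intros i; split; [eauto|intros _; discriminate].
  - intros n. lia.
Qed.

Lemma red1 : sW_le ConC (pbar ConC).
Proof.
  exists (mach MDec), (mach MSucc). intros G Gf Gr p A HpA Hdom.
  assert (Hr : rep (completion closed_neg) (fun n => S (p n)) (Some A)) by (exists p; split; auto; apply minus1_S).
  destruct (Gr _ (Some A) Hr) as [q' [Gq' [oy [Hoy Hpb]]]].
  { destruct Hdom as [y Hy]. exists (Some y). left. split; [exists y; auto|]. eauto. }
  destruct Hpb as [[_ [y [-> Hy]]]|Hn]; [|contradiction].
  destruct Hoy as [t [Hmt Ht]].
  exists t. split.
  - exists (fun n => S (p n)), q'. split; [apply Phi_MSucc|]. split; auto. apply Phi_MDec; auto.
  - exists y. auto.
Qed.

Lemma fin2 p ox q' y : rep unit_interval q' y -> Bset false p y ->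
  rep (completion closed_neg) p ox ->
  exists oy, rep (completion unit_interval) (fun n => S (q' n)) oy /\ pbar ConC ox oy.
Proof.
  intros Hq By Hp. exists (Some y). split.
  - exists q'. split; auto. apply minus1_S.
  - destruct ox as [A|]; simpl; auto.
    destruct (Classical_Prop.classic (pdom ConC A)) as [HD|HD]; [left|right; auto].
    split; auto. exists y. split; auto.
    destruct HD as [y0 [Ay0 [Hne Hc]]]. destruct Hp as [q [Hmq HqA]].
    split; [|split; auto]. eapply (Bset_sub false p q A); eauto.
Qed.

Lemma red2 : sW_le (pbar ConC) ConC.
Proof.
  exists (mach MSucc), (mach (MHull false false)). intros G Gf Gr p ox Hp _.
  set (r := fun n => shn false (rM false p n)).
  assert (Hr : rep closed_neg r (Bset false p)) by (intros x; reflexivity).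
  destruct (Gr _ _ Hr (Bset_dom false p)) as [q' [Gq' [y [Hy Hcy]]]].
  destruct (fin2 p ox q' y Hy (proj1 Hcy) Hp) as [oy [H1 H2]].
  exists (fun n => S (q' n)). split; [|eauto].
  exists r, q'. split; [apply Phi_MHull|]. split; auto. apply Phi_MSucc.
Qed.

Lemma red3 : sW_le (pbar ConC) (ptot ConC).
Proof.
  exists (mach MSucc), (mach (MHull false false)). intros G Gf Gr p ox Hp _.
  set (r := fun n => shn false (rM false p n)).
  assert (Hr : rep closed_neg r (Bset false p)) by (intros x; reflexivity).
  pose proof (Bset_dom false p) as HD.
  destruct (Gr _ _ Hr) as [q' [Gq' [y [Hy Hcy]]]].
  { destruct HD as [y0 Hy0]. exists y0. left; auto. }
  destruct Hcy as [Hcy|Hcy]; [|contradiction].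
  destruct (fin2 p ox q' y Hy (proj1 Hcy) Hp) as [oy [H1 H2]].
  exists (fun n => S (q' n)). split; [|eauto].
  exists r, q'. split; [apply Phi_MHull|]. split; auto. apply Phi_MSucc.
Qed.

Lemma red4 : sW_le (ptot ConC) (pbar ConC).
Proof.
  exists (mach MDec), (mach (MHull true true)). intros G Gf Gr p A HpA _.
  set (r := fun n => shn true (rM true p n)).
  pose proof (Bset_dom true p) as HD.
  assert (Hr : rep (completion closed_neg) r (Some (Bset true p))).
  { exists (rM true p). split; [apply minus1_S|]. intros x; reflexivity. }
  destruct (Gr _ _ Hr) as [q' [Gq' [oy [Hoy Hpb]]]].
  { destruct HD as [y0 Hy0]. exists (Some y0). left. split; [exists y0; auto|]. eauto. }
  destruct Hpb as [[_ [y [-> Hy]]]|Hn]; [|contradiction].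
  destruct Hoy as [t [Hmt Ht]].
  exists t. split.
  - exists r, q'. split; [apply Phi_MHull|]. split; auto. apply Phi_MDec; auto.
  - exists y. split; auto.
    destruct (Classical_Prop.classic (pdom ConC A)) as [HA|HA]; [left|right; auto].
    destruct HA as [y0 [Ay0 [Hne Hc]]].
    split; [|split; auto]. eapply (Bset_sub true p p A); eauto. apply (minus1_S p).
    apply (proj1 Hy).
Qed.

Theorem proposition6p6 :
  sW_equiv ConC (pbar ConC) /\ sW_equiv (pbar ConC) (ptot ConC).
Proof.
  split; split; [apply red1 | apply red2 | apply red3 | apply red4].
Qed.
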